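(* Let $p$ be a prime and $n\ge 1$. The maximum, over all two-element subsets $\{P,Q\}\subseteq \mathbb Z_p^n$, of the number of distinct reduced Gröbner bases of the ideal $I(\{P,Q\})\subseteq \mathbb Z_p[x_1,\ldots,x_n]$ is $n$.
   Context: $\mathbb Z_p$ denotes the field of integers modulo $p$. For a finite set $S\subseteq \mathbb Z_p^n$, $I(S)$ is the ideal of all polynomials in $\mathbb Z_p[x_1,\ldots,x_n]$ vanishing at every point of $S$. The number of reduced Gröbner bases of an ideal means the number of distinct reduced Gröbner bases obtained as the monomial order ranges over all monomial orders. *)

(* Defs.v *)
From HB Require Import structures.
From mathcomp Require Import all_boot all_order all_algebra.
From Stdlib Require List.
Set Implicit Arguments. Unset Strict Implicit. Unset Printing Implicit Defensive.
Import GRing.Theory.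
Local Open Scope ring_scope.

(* Monomials x_1^{a_1} ... x_n^{a_n} are exponent vectors. *)
Definition mon (n : nat) := {ffun 'I_n -> nat}.
Definition mon1 (n : nat) : mon n := [ffun => 0%N].
Definition mmul (n : nat) (a b : mon n) : mon n := [ffun i => (a i + b i)%N].
Definition mdiv (n : nat) (a b : mon n) : bool := [forall i, (a i <= b i)%N].

(* A polynomial in F[x_1..x_n] is a finitely supported coefficient function. *)
Definition finsupp (F : fieldType) (n : nat) (f : mon n -> F) : Prop :=
  exists s : seq (mon n), forall m, f m != 0 -> m \in s.

Definition mon_eval (F : fieldType) (n : nat) (m : mon n) (x : 'rV[F]_n) : F :=
  \prod_(i < n) x ord0 i ^+ m i.

(* f vanishes at x (the sum is taken over any duplicate-free list covering
   the support of f; the value does not depend on that choice). *)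
Definition vanishes_at (F : fieldType) (n : nat) (f : mon n -> F) (x : 'rV[F]_n) : Prop :=
  exists s : seq (mon n), uniq s /\ (forall m, f m != 0 -> m \in s) /\
    \sum_(m <- s) f m * mon_eval m x = 0.

Definition vanishing_ideal (F : fieldType) (n : nat) (S : 'rV[F]_n -> Prop)
  (f : mon n -> F) : Prop :=
  finsupp f /\ forall x, S x -> vanishes_at f x.

Definition monomial_order (n : nat) (le : rel (mon n)) : Prop :=
  [/\ reflexive le /\ antisymmetric le /\ transitive le,
      (forall a b, le a b || le b a),
      (forall a b c, le a b -> le (mmul a c) (mmul b c)) &
      (forall A : mon n -> Prop, (exists m, A m) ->
         exists m, A m /\ forall m', A m' -> le m m')].

Definition lead_mon (F : fieldType) (n : nat) (le : rel (mon n))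
  (f : mon n -> F) (m : mon n) : Prop :=
  f m != 0 /\ forall m', f m' != 0 -> le m' m.

Definition reduced_groebner (F : fieldType) (n : nat) (le : rel (mon n))
  (I : (mon n -> F) -> Prop) (G : (mon n -> F) -> Prop) : Prop :=
  [/\
      (exists l : list (mon n -> F), forall g, G g <-> List.In g l),
      (forall g, G g -> I g /\ exists m, lead_mon le g m /\ g m = 1),
      (* Groebner basis: <LT(G)> = <LT(I)> *)
      (forall f, I f -> (exists m, f m != 0) ->
         exists g mg mf, [/\ G g, lead_mon le g mg, lead_mon le f mf & mdiv mg mf]) &
      (forall g g', G g -> G g' -> g <> g' ->
         forall mg', lead_mon le g' mg' -> forall m, g m != 0 -> ~~ mdiv mg' m)].

Definition is_some_rgb (F : fieldType) (n : nat)
  (I : (mon n -> F) -> Prop) (G : (mon n -> F) -> Prop) : Prop :=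
  exists le : rel (mon n), monomial_order le /\ reduced_groebner le I G.

Definition same_set (F : fieldType) (n : nat) (G1 G2 : (mon n -> F) -> Prop) : Prop :=
  forall g, G1 g <-> G2 g.

Definition num_reduced_groebner (F : fieldType) (n : nat)
  (I : (mon n -> F) -> Prop) (k : nat) : Prop :=
  exists L : list ((mon n -> F) -> Prop),
    [/\ length L = k,
        (forall G, List.In G L -> is_some_rgb I G),
        (forall G, is_some_rgb I G -> exists G', List.In G' L /\ same_set G G') &
        (forall i j, (i < length L)%coq_nat -> (j < length L)%coq_nat -> i <> j ->
           forall d, ~ same_set (List.nth i L d) (List.nth j L d))].

Definition pair_set (F : fieldType) (n : nat) (P Q : 'rV[F]_n) (x : 'rV[F]_n) : Prop :=
  x = P \/ x = Q.

(* Main.v *)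
Require Import Defs.
From mathcomp Require Import all_boot all_order all_algebra.
From mathcomp Require Import zify ring.
From Stdlib Require Import Classical FunctionalExtensionality.
Set Implicit Arguments. Unset Strict Implicit. Unset Printing Implicit Defensive.
Import GRing.Theory.

Fixpoint lexle (s t : seq nat) : bool :=
  match s, t with
  | x :: s', y :: t' => (x < y) || ((x == y) && lexle s' t')
  | _, _ => true
  end.

Lemma lexle_refl s : lexle s s.
Proof. by elim: s => //= x s ->; rewrite eqxx orbT. Qed.

Lemma lexle_total s t : lexle s t || lexle t s.
Proof.
elim: s t => [|x s IH] [|y t] //=.
case: (ltngtP x y) => //= ->; rewrite ?eqxx ?orbT //=.
Qed.

Section LexMap.
Variable X : Type.

Lemma lexle_trans (e : seq X) (f g h : X -> nat) :
  lexle (map f e) (map g e) -> lexle (map g e) (map h e) -> lexle (map f e) (map h e).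
Proof.
elim: e => //= x e IH.
case/orP=> [lt1|/andP[/eqP e1 l1]]; case/orP=> [lt2|/andP[/eqP e2 l2]].
- by rewrite (ltn_trans lt1 lt2).
- by rewrite -e2 lt1.
- by rewrite e1 lt2.
- by rewrite e1 e2 eqxx (IH l1 l2) orbT.
Qed.

Lemma lexle_anti (e : seq X) (f g : X -> nat) :
  lexle (map f e) (map g e) -> lexle (map g e) (map f e) -> map f e = map g e.
Proof.
elim: e => //= x e IH.
case/orP=> [lt1|/andP[/eqP e1 l1]]; case/orP=> [lt2|/andP[/eqP e2 l2]].
- by have := ltn_trans lt1 lt2; rewrite ltnn.
- by rewrite e2 ltnn in lt1.
- by rewrite e1 ltnn in lt2.
- by rewrite e1 (IH l1 l2).
Qed.

Lemma lexle_add (e : seq X) (f g h : X -> nat) :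
  lexle (map f e) (map g e) ->
  lexle (map (fun x => f x + h x) e) (map (fun x => g x + h x) e).
Proof.
elim: e => //= x e IH.
case/orP=> [lt1|/andP[/eqP e1 l1]].
- by rewrite ltn_add2r lt1.
- by rewrite e1 eqxx (IH l1) orbT.
Qed.

Lemma nat_min (B : nat -> Prop) : (exists n, B n) ->
  exists n, B n /\ forall m, B m -> n <= m.
Proof.
move=> [n Bn]; apply: NNPP => H.
have H2 : forall N m, m <= N -> ~ B m.
  elim=> [|N IH] m.
    rewrite leqn0 => /eqP -> B0; apply: H; exists 0; split => //.
  move=> lem Bm; case: (ltnP m N.+1) => [/ltnSE lmN|_]; first exact: IH lmN Bm.
  apply: H; exists m; split => // m' Bm'; case: (leqP m m') => // lt.
  by exfalso; apply: (IH m') => //; rewrite -ltnS (leq_trans lt lem).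
exact: (H2 n n (leqnn n) Bn).
Qed.

Lemma lexle_wf (e : seq X) (T : Type) (k : T -> X -> nat) (A : T -> Prop) :
  (exists t, A t) -> exists t, A t /\ forall t', A t' -> lexle (map (k t) e) (map (k t') e).
Proof.
elim: e A => [|x e IH] A exA; first by case: exA => t At; exists t.
have [v [[t0 [At0 <-]] vmin]] := nat_min (B := fun v => exists t, A t /\ k t x = v)
   (let: ex_intro t At := exA in ex_intro _ (k t x) (ex_intro _ t (conj At erefl))).
have [t [[At kt] tmin]] := IH (fun t => A t /\ k t x = k t0 x) (ex_intro _ t0 (conj At0 erefl)).
exists t; split => // t' At' /=.
have := vmin (k t' x) (ex_intro _ t' (conj At' erefl)).
rewrite kt leq_eqVlt => /orP[/eqP e1|->]; last by [].
by rewrite e1 eqxx (tmin t') ?orbT.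
Qed.

Lemma map_eq_in (e : seq X) (f g : X -> nat) : map f e = map g e -> forall x, List.In x e -> f x = g x.
Proof.
elim: e => //= y e IH [e1 e2] x [<-|] //; exact: IH.
Qed.
End LexMap.

Section Mono.
Variable n : nat.
Implicit Types a b c m : mon n.
Implicit Types le : rel (mon n).

Definition Xv (k : 'I_n) : mon n := [ffun j => if j == k then 1%N else 0%N].
Definition X2 (k : 'I_n) : mon n := [ffun j => if j == k then 2%N else 0%N].
Definition mpow m (k : nat) : mon n := [ffun j => m j * k]%N.

Lemma mmul1m m : mmul (mon1 n) m = m.
Proof. by apply/ffunP => j; rewrite !ffunE. Qed.
Lemma mmulC a b : mmul a b = mmul b a.
Proof. by apply/ffunP => j; rewrite !ffunE addnC. Qed.

Lemma mo_refl le : monomial_order le -> reflexive le.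
Proof. by case=> [[]]. Qed.
Lemma mo_anti le : monomial_order le -> forall a b, le a b -> le b a -> a = b.
Proof. case=> [[_ [an _]]] _ _ _ a b h1 h2; apply: an; by rewrite h1 h2. Qed.
Lemma mo_trans le : monomial_order le -> forall b a c, le a b -> le b c -> le a c.
Proof. by case=> [[_ [_ tr]]] _ _ _ b a c; apply: tr. Qed.
Lemma mo_total le : monomial_order le -> forall a b, le a b || le b a.
Proof. by case. Qed.
Lemma mo_mul le : monomial_order le -> forall a b c, le a b -> le (mmul a c) (mmul b c).
Proof. by case. Qed.

Lemma mo_ge1 le : monomial_order le -> forall m, le (mon1 n) m.
Proof.
move=> mo m; apply: NNPP => H.
have lm1 : le m (mon1 n).
  by have := mo_total mo (mon1 n) m; case: (le (mon1 n) m) H => //= _ ->.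
have [a [[k ->] amin]] : exists a, (exists k, a = mpow m k) /\ forall a', (exists k, a' = mpow m k) -> le a a'.
  by case: mo => _ _ _ wf; apply: wf; exists (mpow m 0); exists 0%N.
have h1 := mo_mul mo (mpow m k) lm1.
rewrite mmul1m in h1.
have e : mmul m (mpow m k) = mpow m k.+1.
  by apply/ffunP => j; rewrite !ffunE mulnS.
rewrite e in h1.
have h2 := amin (mpow m k.+1) (ex_intro _ k.+1 erefl).
have := mo_anti mo h1 h2 => /ffunP E.
have : m = mon1 n.
  apply/ffunP => j; have := E j; rewrite !ffunE mulnS => /eqP.
  by rewrite -{2}[(m j * k)%N]add0n eqn_add2r => /eqP.
by move=> em; apply: H; rewrite -em; apply: mo_refl.
Qed.

Lemma mo_div le : monomial_order le -> forall a b, mdiv a b -> le a b.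
Proof.
move=> mo a b /forallP dv.
have := mo_mul mo a (mo_ge1 mo [ffun j => b j - a j]%N).
rewrite mmul1m.
have -> : mmul [ffun j => b j - a j]%N a = b by apply/ffunP => j; rewrite !ffunE subnK.
by [].
Qed.
End Mono.

Section Poly.
Variable F : fieldType.
Variable n : nat.
Variables P Q : 'rV[F]_n.
Local Open Scope ring_scope.
Implicit Types a b c m : mon n.
Implicit Types f : mon n -> F.
Implicit Types x : 'rV[F]_n.
Implicit Types i k : 'I_n.

Lemma sum_supp f (e : mon n -> F) s s' : uniq s -> uniq s' ->
  (forall m, f m != 0 -> m \in s) -> (forall m, f m != 0 -> m \in s') ->
  \sum_(m <- s) f m * e m = \sum_(m <- s') f m * e m.
Proof.
move=> us us' hs hs'.
have E t : \sum_(m <- t) f m * e m = \sum_(m <- [seq m <- t | f m != 0]) f m * e m.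
  rewrite big_filter [RHS]big_mkcond /=; apply: eq_bigr => m _.
  by case: eqP => // ->; rewrite mul0r.
rewrite E (E s'); apply: perm_big; apply: uniq_perm; rewrite ?filter_uniq //.
move=> m; rewrite !mem_filter; case: (f m != 0) / idP => //= h.
by rewrite (hs _ h) (hs' _ h).
Qed.

Lemma van_sum f x s : vanishes_at f x -> uniq s -> (forall m, f m != 0 -> m \in s) ->
  \sum_(m <- s) f m * mon_eval m x = 0.
Proof.
case=> s0 [u0 [h0 e0]] us hs; by rewrite (sum_supp _ us u0 hs h0).
Qed.

Lemma ev_X k x : mon_eval (Xv k) x = x ord0 k.
Proof.
rewrite /mon_eval (bigD1 k) //= big1 ?mulr1 ?ffunE ?eqxx ?expr1 //.
by move=> j /negbTE jk; rewrite ffunE jk expr0.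
Qed.
Lemma ev_X2 k x : mon_eval (X2 k) x = x ord0 k ^+ 2.
Proof.
rewrite /mon_eval (bigD1 k) //= big1 ?mulr1 ?ffunE ?eqxx //.
by move=> j /negbTE jk; rewrite ffunE jk expr0.
Qed.
Lemma ev_1 x : mon_eval (mon1 n) x = 1.
Proof. by rewrite /mon_eval big1 // => j _; rewrite ffunE expr0. Qed.

Lemma Xv_neq k i : k != i -> Xv k != Xv i.
Proof.
move=> ki; apply/negP => /eqP /ffunP /(_ k); rewrite !ffunE eqxx.
by rewrite (negbTE ki).
Qed.
Lemma Xv_neq1 k : Xv k != mon1 n.
Proof. by apply/negP => /eqP /ffunP /(_ k); rewrite !ffunE eqxx. Qed.
Lemma X2_neqX k i : X2 i != Xv k.
Proof.
apply/negP => /eqP /ffunP /(_ i); rewrite !ffunE eqxx; by case: (i == k).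
Qed.
Lemma X2_neq1 i : X2 i != mon1 n.
Proof. by apply/negP => /eqP /ffunP /(_ i); rewrite !ffunE eqxx. Qed.
Lemma X2_neq i j : i != j -> X2 i != X2 j.
Proof.
move=> ij; apply/negP => /eqP /ffunP /(_ i); rewrite !ffunE eqxx.
by rewrite (negbTE ij).
Qed.

Definition Pt j := P ord0 j.
Definition Qt j := Q ord0 j.

Definition alpha (i k : 'I_n) : F := - (Qt k - Pt k) / (Qt i - Pt i).
Definition beta (i k : 'I_n) : F := - Pt k - alpha i k * Pt i.

Definition hpoly (i k : 'I_n) (m : mon n) : F :=
  if m == Xv k then 1 else if m == Xv i then alpha i k
  else if m == mon1 n then beta i k else 0.
Definition gpoly (i : 'I_n) (m : mon n) : F :=
  if m == X2 i then 1 else if m == Xv i then - (Pt i + Qt i)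
  else if m == mon1 n then Pt i * Qt i else 0.

Definition II := vanishing_ideal (pair_set P Q).

Lemma out_supp f (s : seq (mon n)) m : (forall m, f m != 0 -> m \in s) -> m \notin s -> f m = 0.
Proof. by move=> hs ms; apply/eqP; apply: contraNT ms; apply: hs. Qed.

Lemma uniq3 i k : k != i -> uniq [:: Xv k; Xv i; mon1 n].
Proof.
move=> ki; rewrite /= !inE negb_or Xv_neq // Xv_neq1 Xv_neq1 //.
Qed.

Lemma hpoly_uniq i k f : Pt i != Qt i -> k != i -> II f ->
  (forall m, f m != 0 -> m \in [:: Xv k; Xv i; mon1 n]) -> f (Xv k) = 1 ->
  f = hpoly i k.
Proof.
move=> D ki [_ vI] hs f1.
have eP := van_sum (vI P (or_introl erefl)) (uniq3 ki) hs.
have eQ := van_sum (vI Q (or_intror erefl)) (uniq3 ki) hs.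
rewrite !big_cons !big_nil !ev_X !ev_1 f1 -/(Pt _) -/(Qt _) in eP eQ.
rewrite -/(Pt _) -/(Qt _) in eP eQ.
have dnz : Qt i - Pt i != 0 by rewrite subr_eq0 eq_sym.
have fa : f (Xv i) = alpha i k.
  have E : f (Xv i) * (Qt i - Pt i) + (Qt k - Pt k) = 0.
    by have := f_equal2 (fun a b : F => a - b) eQ eP; rewrite subrr => <-; ring.
  apply: (mulIf dnz); rewrite /alpha divfK //.
  by apply/eqP; rewrite -addr_eq0 E.
have fb : f (mon1 n) = beta i k.
  rewrite /beta -fa; apply/eqP; rewrite -subr_eq0; apply/eqP.
  rewrite -[RHS]eP; ring.
apply: functional_extensionality => m; rewrite /hpoly.
case: eqP => [->//|mk]; case: eqP => [->//|mi]; case: eqP => [->//|m1].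
apply: out_supp hs _; rewrite !inE; apply/negP.
by case/or3P => /eqP.
Qed.

Lemma uniq3g i : uniq [:: X2 i; Xv i; mon1 n].
Proof. by rewrite /= !inE negb_or X2_neqX X2_neq1 Xv_neq1. Qed.

Lemma gpoly_uniq i f : Pt i != Qt i -> II f ->
  (forall m, f m != 0 -> m \in [:: X2 i; Xv i; mon1 n]) -> f (X2 i) = 1 ->
  f = gpoly i.
Proof.
move=> D [_ vI] hs f1.
have eP := van_sum (vI P (or_introl erefl)) (uniq3g i) hs.
have eQ := van_sum (vI Q (or_intror erefl)) (uniq3g i) hs.
rewrite !big_cons !big_nil !ev_X !ev_X2 !ev_1 f1 -/(Pt _) -/(Qt _) in eP eQ.
rewrite -/(Pt _) -/(Qt _) in eP eQ.
have dnz : Qt i - Pt i != 0 by rewrite subr_eq0 eq_sym.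
have fa : f (Xv i) = - (Pt i + Qt i).
  have E : (f (Xv i) + (Pt i + Qt i)) * (Qt i - Pt i) = 0.
    by have := f_equal2 (fun a b : F => a - b) eQ eP; rewrite subrr => <-; ring.
  move/eqP: E; rewrite mulf_eq0 (negbTE dnz) orbF => /eqP E.
  by apply/eqP; rewrite -addr_eq0 E.
have fb : f (mon1 n) = Pt i * Qt i.
  apply/eqP; rewrite -subr_eq0; apply/eqP.
  by rewrite -[RHS]eP fa; ring.
apply: functional_extensionality => m; rewrite /gpoly.
case: eqP => [->//|mk]; case: eqP => [->//|mi]; case: eqP => [->//|m1].
apply: out_supp hs _; rewrite !inE; apply/negP.
by case/or3P => /eqP.
Qed.

Lemma zero_uniq i f : Pt i != Qt i -> II f ->
  (forall m, f m != 0 -> m \in [:: Xv i; mon1 n]) -> forall m, f m = 0.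
Proof.
move=> D [_ vI] hs.
have u2 : uniq [:: Xv i; mon1 n] by rewrite /= !inE Xv_neq1.
have eP := van_sum (vI P (or_introl erefl)) u2 hs.
have eQ := van_sum (vI Q (or_intror erefl)) u2 hs.
rewrite !big_cons !big_nil !ev_X !ev_1 -/(Pt _) -/(Qt _) in eP eQ.
rewrite -/(Pt _) -/(Qt _) in eP eQ.
have dnz : Qt i - Pt i != 0 by rewrite subr_eq0 eq_sym.
have fa : f (Xv i) = 0.
  have E : f (Xv i) * (Qt i - Pt i) = 0.
    by have := f_equal2 (fun a b : F => a - b) eQ eP; rewrite subrr => <-; ring.
  by move/eqP: E; rewrite mulf_eq0 (negbTE dnz) orbF => /eqP.
have fb : f (mon1 n) = 0.
  by rewrite -[RHS]eP fa; ring.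
move=> m; case: (m =P Xv i) => [->//|mi]; case: (m =P mon1 n) => [->//|m1].
apply: out_supp hs _; rewrite !inE; apply/negP.
by case/orP => /eqP.
Qed.

Lemma hpoly_supp i k m : k != i -> hpoly i k m != 0 -> m \in [:: Xv k; Xv i; mon1 n].
Proof.
move=> ki; rewrite /hpoly !inE.
by case: (m == Xv k); case: (m == Xv i); case: (m == mon1 n); rewrite ?eqxx ?orbT.
Qed.

Lemma gpoly_supp i m : gpoly i m != 0 -> m \in [:: X2 i; Xv i; mon1 n].
Proof.
rewrite /gpoly !inE.
by case: (m == X2 i); case: (m == Xv i); case: (m == mon1 n); rewrite ?eqxx ?orbT.
Qed.

Lemma hpoly_Xk i k : hpoly i k (Xv k) = 1.
Proof. by rewrite /hpoly eqxx. Qed.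
Lemma hpoly_Xi i k : k != i -> hpoly i k (Xv i) = alpha i k.
Proof. by move=> ki; rewrite /hpoly eq_sym (negbTE (Xv_neq ki)) eqxx. Qed.
Lemma hpoly_1 i k : hpoly i k (mon1 n) = beta i k.
Proof. by rewrite /hpoly eq_sym (negbTE (Xv_neq1 _)) eq_sym (negbTE (Xv_neq1 _)) eqxx. Qed.
Lemma gpoly_X2 i : gpoly i (X2 i) = 1.
Proof. by rewrite /gpoly eqxx. Qed.
Lemma gpoly_Xi i : gpoly i (Xv i) = - (Pt i + Qt i).
Proof. by rewrite /gpoly eq_sym (negbTE (X2_neqX _ _)) eqxx. Qed.
Lemma gpoly_1 i : gpoly i (mon1 n) = Pt i * Qt i.
Proof. by rewrite /gpoly eq_sym (negbTE (X2_neq1 _)) eq_sym (negbTE (Xv_neq1 _)) eqxx. Qed.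

Lemma hpoly_I i k : Pt i != Qt i -> k != i -> II (hpoly i k).
Proof.
move=> D ki; split; first by exists [:: Xv k; Xv i; mon1 n] => m; apply: hpoly_supp.
move=> x Hx; exists [:: Xv k; Xv i; mon1 n]; split; first exact: uniq3.
split; first by move=> m; apply: hpoly_supp.
rewrite !big_cons big_nil !ev_X !ev_1 hpoly_Xk hpoly_Xi // hpoly_1.
have dnz : Qt i - Pt i != 0 by rewrite subr_eq0 eq_sym.
have ad : alpha i k * (Qt i - Pt i) = - (Qt k - Pt k) by rewrite /alpha divfK.
rewrite /beta; move: (alpha i k) ad => a ad.
case: Hx => ->; rewrite /Pt /Qt in ad *; first by ring.
have -> : Q ord0 k = P ord0 k - a * (Q ord0 i - P ord0 i) by rewrite ad; ring.
ring.
Qed.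

Lemma gpoly_I i : II (gpoly i).
Proof.
split; first by exists [:: X2 i; Xv i; mon1 n] => m; apply: gpoly_supp.
move=> x Hx; exists [:: X2 i; Xv i; mon1 n]; split; first exact: uniq3g.
split; first by move=> m; apply: gpoly_supp.
rewrite !big_cons big_nil !ev_X !ev_X2 !ev_1 gpoly_X2 gpoly_Xi gpoly_1.
by case: Hx => ->; rewrite -/(Pt _) -/(Qt _); ring.
Qed.
End Poly.

Lemma map_eq_mem (X : eqType) (e : seq X) (f g : X -> nat) :
  map f e = map g e -> forall x, x \in e -> f x = g x.
Proof.
elim: e => //= y e IH [e1 e2] x; rewrite inE; case/orP => [/eqP -> //|]; exact: IH.
Qed.

Section Ord.
Variable n : nat.
Variable i : 'I_n.
Implicit Types a b c m : mon n.

Definition wt (j : 'I_n) : nat := if j == i then 1%N else 2%N.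
Definition W m : nat := (\sum_(j < n) m j * wt j)%N.
Definition kf m (o : option 'I_n) : nat := match o with None => W m | Some j => m j end.
Definition oe : seq (option 'I_n) := None :: map Some (enum 'I_n).
Definition leo : rel (mon n) := fun a b => lexle (map (kf a) oe) (map (kf b) oe).

Lemma W_mul a c : W (mmul a c) = (W a + W c)%N.
Proof. by rewrite /W -big_split; apply: eq_bigr => j _; rewrite ffunE mulnDl. Qed.

Lemma W_X k : W (Xv k) = wt k.
Proof.
rewrite /W (bigD1 k) //= big1 ?addn0 ?ffunE ?eqxx ?mul1n //.
by move=> j /negbTE jk; rewrite ffunE jk.
Qed.
Lemma W_X2 : W (X2 i) = 2%N.
Proof.
rewrite /W (bigD1 i) //= big1 ?addn0 ?ffunE ?eqxx /wt ?eqxx //.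
by move=> j /negbTE jk; rewrite ffunE jk.
Qed.
Lemma W_1 : W (mon1 n) = 0%N.
Proof. by rewrite /W big1 // => j _; rewrite ffunE. Qed.

Lemma W_ge m j : (m j * wt j <= W m)%N.
Proof. by rewrite /W (bigD1 j) //= leq_addr. Qed.

Lemma W_le1 m : (W m <= 1)%N -> m = mon1 n \/ m = Xv i.
Proof.
move=> h.
have z j : j != i -> m j = 0%N.
  move=> ji; have := leq_trans (W_ge m j) h; rewrite /wt (negbTE ji); lia.
have hi : (m i <= 1)%N by have := leq_trans (W_ge m i) h; rewrite /wt eqxx muln1.
case: (m i =P 0%N) => [h0|h1]; last have h1' : m i = 1%N by lia.
  left; apply/ffunP => j; rewrite !ffunE.
  by case: (j =P i) => [->|/eqP ji]; [exact: h0 | rewrite z].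
right; apply/ffunP => j; rewrite !ffunE.
by case: (j =P i) => [->|/eqP ji]; [rewrite ?eqxx; exact: h1' | rewrite z //; case: ifP => // /eqP; move: ji => /eqP].
Qed.

Lemma kf_mul a c o : kf (mmul a c) o = (kf a o + kf c o)%N.
Proof. by case: o => [j|] /=; rewrite ?ffunE ?W_mul. Qed.

Lemma leo_mo : monomial_order leo.
Proof.
split.
- split; first by move=> a; apply: lexle_refl.
  split; last by move=> b a c; apply: lexle_trans.
  move=> a b /andP[h1 h2]; have E := lexle_anti h1 h2.
  apply/ffunP => j; have := @map_eq_mem _ _ _ _ E (Some j); apply.
  by rewrite inE /= map_f ?mem_enum.
- by move=> a b; apply: lexle_total.
- move=> a b c h; rewrite /leo.
  rewrite (eq_map (kf_mul a c)) (eq_map (kf_mul b c)); exact: lexle_add.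
- move=> A exA; exact: lexle_wf.
Qed.

Lemma leo_W a b : leo a b -> (W a <= W b)%N.
Proof. by rewrite /leo /=; case/orP => [/ltnW //|/andP[/eqP -> _]]. Qed.
Lemma W_leo a b : (W a < W b)%N -> leo a b.
Proof. by rewrite /leo /= => ->. Qed.
End Ord.

Lemma In_mem (T : eqType) (x : T) (s : seq T) : List.In x s <-> x \in s.
Proof.
elim: s => //= y s IH; rewrite inE; split.
  by case=> [->|/IH ->]; rewrite ?eqxx ?orbT.
by case/orP => [/eqP ->|/IH]; [left|right].
Qed.

Lemma In_map (A : eqType) (B : Type) (f : A -> B) (s : seq A) y :
  List.In y (map f s) <-> exists x, y = f x /\ x \in s.
Proof.
elim: s => [|a s IH] /=; first by split=> // -[x [_]].
split.
  case=> [<-|/IH [x [-> xs]]]; first by exists a; rewrite inE eqxx.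
  by exists x; rewrite inE xs orbT.
case=> x [ey]; rewrite inE => /orP [/eqP xa|xs]; first by left; rewrite ey xa.
by right; apply/IH; exists x.
Qed.

Lemma seq_max (T : eqType) (r : rel T) : (forall a b, r a b || r b a) -> transitive r ->
  forall x s, exists2 m, m \in x :: s & forall y, y \in x :: s -> r y m.
Proof.
move=> tot tr x s; elim: s x => [|z s IH] x.
  exists x; first by rewrite inE.
  by move=> y; rewrite inE => /eqP ->; have := tot x x; rewrite orbb.
have [m ms mmax] := IH z.
case/orP: (tot x m) => h.
  exists m; first by rewrite inE ms orbT.
  move=> y; rewrite inE => /orP[/eqP -> //|]; exact: mmax.
exists x; first by rewrite inE eqxx.
move=> y; rewrite inE => /orP[/eqP -> |ys]; first by have := tot x x; rewrite orbb.
exact: tr (mmax y ys) h.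
Qed.

Lemma lead_unique (F : fieldType) n (le : rel (mon n)) (f : mon n -> F) m1 m2 :
  monomial_order le -> lead_mon le f m1 -> lead_mon le f m2 -> m1 = m2.
Proof.
move=> mo [h1 a1] [h2 a2]; apply: (mo_anti mo); [exact: a2 | exact: a1].
Qed.

Lemma Xv_coord n (k j : 'I_n) : Xv k j = (if j == k then 1 else 0)%N.
Proof. by rewrite ffunE. Qed.
Lemma X2_coord n (k j : 'I_n) : X2 k j = (if j == k then 2 else 0)%N.
Proof. by rewrite ffunE. Qed.
Lemma one_coord n (j : 'I_n) : mon1 n j = 0%N.
Proof. by rewrite ffunE. Qed.

Lemma ndivX n (k : 'I_n) (m : mon n) : m k = 0%N -> ~~ mdiv (Xv k) m.
Proof. by move=> h; apply/forallP => /(_ k); rewrite ffunE eqxx h. Qed.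
Lemma ndivX2 n (k : 'I_n) (m : mon n) : (m k <= 1)%N -> ~~ mdiv (X2 k) m.
Proof. by move=> h; apply/forallP => /(_ k); rewrite ffunE eqxx; lia. Qed.

Section GB.
Variable F : fieldType.
Variable n : nat.
Variables P Q : 'rV[F]_n.
Local Open Scope ring_scope.

Definition Gset (i : 'I_n) (f : mon n -> F) : Prop :=
  (exists k, k != i /\ f = hpoly P Q i k) \/ f = gpoly P Q i.

Definition Glist (i : 'I_n) : seq (mon n -> F) :=
  gpoly P Q i :: map (hpoly P Q i) [seq k <- enum 'I_n | k != i].

Lemma Glist_ok i f : Gset i f <-> List.In f (Glist i).
Proof.
rewrite /Gset /Glist /=; split.
  case=> [[k [ki ->]]|->]; [right|by left].
  by apply/In_map; exists k; rewrite mem_filter ki mem_enum.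
case=> [<-|/In_map [k [-> ]]]; [by right|].
by rewrite mem_filter => /andP[ki _]; left; exists k.
Qed.

Variable i : 'I_n.
Hypothesis D : Pt P i != Pt Q i.

Lemma hpoly_lead_leo k : k != i -> lead_mon (leo i) (hpoly P Q i k) (Xv k).
Proof.
move=> ki; split; first by rewrite hpoly_Xk oner_neq0.
move=> m /(hpoly_supp ki); rewrite !inE => /or3P [/eqP->|/eqP->|/eqP->].
- exact: (mo_refl (leo_mo i)).
- by apply: W_leo; rewrite !W_X /wt eqxx (negbTE ki).
- by apply: W_leo; rewrite W_1 W_X /wt; case: ifP.
Qed.

Lemma gpoly_lead_leo : lead_mon (leo i) (gpoly P Q i) (X2 i).
Proof.
split; first by rewrite gpoly_X2 oner_neq0.
move=> m /gpoly_supp; rewrite !inE => /or3P [/eqP->|/eqP->|/eqP->].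
- exact: (mo_refl (leo_mo i)).
- by apply: W_leo; rewrite W_X2 W_X /wt eqxx.
- by apply: W_leo; rewrite W_1 W_X2.
Qed.

Lemma W_only_i (m : mon n) : (forall k, k != i -> m k = 0%N) -> W i m = m i.
Proof.
move=> h; rewrite /W (bigD1 i) //= big1 ?addn0 /wt ?eqxx ?muln1 //.
by move=> j ji; rewrite h.
Qed.

Lemma gb_leo : reduced_groebner (leo i) (II P Q) (Gset i).
Proof.
have qt : Pt Q i != Pt P i by rewrite eq_sym.
split.
- by exists (Glist i) => f; apply: Glist_ok.
- move=> g [[k [ki ->]]|->].
    split; first exact: hpoly_I.
    by exists (Xv k); split; [exact: hpoly_lead_leo | exact: hpoly_Xk].
  split; first exact: gpoly_I.
  by exists (X2 i); split; [exact: gpoly_lead_leo | exact: gpoly_X2].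
- move=> f If [m0 fm0].
  case: (If) => [[s hs] _].
  have m0t : m0 \in [seq m <- s | f m != 0] by rewrite mem_filter fm0 hs.
  move: m0t; case E: [seq m <- s | f m != 0] => [//|x t] _.
  have [mf mft mfmax] := seq_max (r := leo i) (mo_total (leo_mo i))
      (fun b a c => mo_trans (leo_mo i) (b:=b) (a:=a) (c:=c)) x t.
  rewrite -E mem_filter in mft; case/andP: mft => fmf _.
  have lf : lead_mon (leo i) f mf.
    split => // m' fm'; apply: mfmax; rewrite -E mem_filter fm' hs //.
  case: (leqP (W i mf) 1) => hW.
    exfalso; move/eqP: fmf; apply.
    apply: (zero_uniq D) => // m' fm'.
    have := leq_trans (leo_W (mfmax m' _)) hW.
    rewrite -E mem_filter fm' hs // => /(_ isT) /W_le1.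
    by rewrite !inE => -[->|->]; rewrite eqxx ?orbT.
  case: (boolP [exists k, (k != i) && (0 < mf k)%N]).
    case/existsP => k /andP[ki mk].
    exists (hpoly P Q i k), (Xv k), mf; split => //.
    + by left; exists k.
    + exact: hpoly_lead_leo.
    + apply/forallP => j; rewrite ffunE; case: (j =P k) => [->|] //.
  rewrite negb_exists => /forallP hk.
  have z : forall k, k != i -> mf k = 0%N.
    by move=> k ki; have := hk k; rewrite ki /=; lia.
  rewrite W_only_i // in hW.
  exists (gpoly P Q i), (X2 i), mf; split => //.
  + by right.
  + exact: gpoly_lead_leo.
  + apply/forallP => j; rewrite ffunE; case: (j =P i) => [->|/eqP ji] //.
- move=> g g' Gg Gg' gg' mg' lg' m gm.
  case: Gg' gg' lg' => [[k' [k'i ->]]|->] gg' lg'.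
    have -> := lead_unique (leo_mo i) lg' (hpoly_lead_leo k'i).
    apply: ndivX.
    case: Gg gg' gm => [[k [ki ->]]|->] gg' gm.
      have kk : k' != k by apply/eqP => e; apply: gg'; rewrite e.
      move: gm => /(hpoly_supp ki); rewrite !inE => /or3P [/eqP->|/eqP->|/eqP->];
        by rewrite ?Xv_coord ?one_coord ?(negbTE kk) ?(negbTE k'i).
    move: gm => /gpoly_supp; rewrite !inE => /or3P [/eqP->|/eqP->|/eqP->];
      by rewrite ?X2_coord ?Xv_coord ?one_coord ?(negbTE k'i).
  have -> := lead_unique (leo_mo i) lg' gpoly_lead_leo.
  apply: ndivX2.
  case: Gg gg' gm => [[k [ki ->]]|->] gg' gm; last by [].
  move: gm => /(hpoly_supp ki); rewrite !inE => /or3P [/eqP->|/eqP->|/eqP->];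
    rewrite ?Xv_coord ?one_coord ?eqxx ?(negbTE (negbT _)) //.
  by rewrite eq_sym (negbTE ki).
Qed.
End GB.

Section Shapes.
Variable n : nat.
Implicit Types m : mon n.

Lemma shape1 (i : 'I_n) m : (forall k, k != i -> m k = 0%N) -> (m i <= 1)%N ->
  m = mon1 n \/ m = Xv i.
Proof.
move=> z hi.
case: (m i =P 0%N) => [h0|h1]; last have h1' : m i = 1%N by lia.
  left; apply/ffunP => j; rewrite !ffunE.
  by case: (j =P i) => [->|/eqP ji]; [exact: h0 | rewrite z].
right; apply/ffunP => j; rewrite !ffunE.
by case: (j =P i) => [->|/eqP ji]; [rewrite ?eqxx; exact: h1' | rewrite z //; case: ifP => // /eqP; move: ji => /eqP].
Qed.

Lemma shape2 (i : 'I_n) m : (forall k, k != i -> m k = 0%N) -> (m i <= 2)%N ->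
  m = mon1 n \/ m = Xv i \/ m = X2 i.
Proof.
move=> z hi.
case: (leqP (m i) 1) => h; first by case: (shape1 z h) => ->; [left|right;left].
have h2 : m i = 2%N by lia.
right; right; apply/ffunP => j; rewrite !ffunE.
by case: (j =P i) => [->|/eqP ji]; [rewrite ?eqxx; exact: h2 | rewrite z //; case: ifP => // /eqP; move: ji => /eqP].
Qed.

Lemma divXv_of (k : 'I_n) m : (0 < m k)%N -> mdiv (Xv k) m.
Proof. by move=> h; apply/forallP => j; rewrite ffunE; case: (j =P k) => [->|]. Qed.
Lemma divX2_of (k : 'I_n) m : (1 < m k)%N -> mdiv (X2 k) m.
Proof. by move=> h; apply/forallP => j; rewrite ffunE; case: (j =P k) => [->|]. Qed.

Lemma ndivXv_coord (k : 'I_n) m : ~~ mdiv (Xv k) m -> m k = 0%N.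
Proof. by move=> h; apply/eqP; rewrite -leqn0 leqNgt; apply: contra h; apply: divXv_of. Qed.
Lemma ndivX2_coord (k : 'I_n) m : ~~ mdiv (X2 k) m -> (m k <= 1)%N.
Proof. by move=> h; rewrite leqNgt; apply: contra h; apply: divX2_of. Qed.

Lemma div_Xv m (k : 'I_n) : mdiv m (Xv k) -> m = mon1 n \/ m = Xv k.
Proof.
move/forallP => h; apply: shape1.
  by move=> j jk; have := h j; rewrite ffunE (negbTE jk); lia.
by have := h k; rewrite ffunE eqxx.
Qed.
Lemma div_X2 m (k : 'I_n) : mdiv m (X2 k) -> m = mon1 n \/ m = Xv k \/ m = X2 k.
Proof.
move/forallP => h; apply: shape2.
  by move=> j jk; have := h j; rewrite ffunE (negbTE jk); lia.
by have := h k; rewrite ffunE eqxx.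
Qed.
End Shapes.

Section Classify.
Variable F : fieldType.
Variable n : nat.
Variables P Q : 'rV[F]_n.
Local Open Scope ring_scope.
Variable le : rel (mon n).
Hypothesis mo : monomial_order le.
Variable G : (mon n -> F) -> Prop.
Hypothesis rgb : reduced_groebner le (II P Q) G.
Variable i : 'I_n.
Hypothesis Di : Pt P i != Pt Q i.
Hypothesis imin : forall j, Pt P j != Pt Q j -> le (Xv i) (Xv j).

Lemma rgbI g : G g -> II P Q g.
Proof. by case: rgb => _ h _ _ /h [a _]. Qed.
Lemma rgbL g : G g -> exists m, lead_mon le g m /\ g m = 1.
Proof. by case: rgb => _ h _ _ /h [_ a]. Qed.
Lemma rgbGB f : II P Q f -> (exists m, f m != 0) ->
  exists g mg mf, [/\ G g, lead_mon le g mg, lead_mon le f mf & mdiv mg mf].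
Proof. by case: rgb => _ _ h _; apply: h. Qed.
Lemma rgbR g g' : G g -> G g' -> g <> g' ->
  forall mg', lead_mon le g' mg' -> forall m, g m != 0 -> ~~ mdiv mg' m.
Proof. by case: rgb => _ _ _ h; apply: h. Qed.

Lemma no_const g m : II P Q g -> lead_mon le g m -> m <> mon1 n.
Proof.
move=> Ig [gm lm] em; subst m.
have z := zero_uniq Di Ig.
move/eqP: gm; apply; apply: z => m' gm'.
by rewrite (mo_anti mo (lm m' gm') (mo_ge1 mo m')) !inE eqxx orbT.
Qed.

Lemma alpha0 k : Pt P k = Pt Q k -> alpha P Q i k = 0.
Proof. by move=> e; rewrite /alpha e subrr oppr0 mul0r. Qed.

Lemma hl k : k != i -> lead_mon le (hpoly P Q i k) (Xv k).
Proof.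
move=> ki; split; first by rewrite hpoly_Xk oner_neq0.
move=> m hm; move: (hpoly_supp ki hm); rewrite !inE => /or3P [/eqP e|/eqP e|/eqP e]; subst m.
- exact: (mo_refl mo).
- apply: imin; apply/eqP => e; move: hm; by rewrite hpoly_Xi // alpha0 // eqxx.
- exact: mo_ge1.
Qed.

Lemma gl : lead_mon le (gpoly P Q i) (X2 i).
Proof.
split; first by rewrite gpoly_X2 oner_neq0.
move=> m hm; move: (gpoly_supp hm); rewrite !inE => /or3P [/eqP e|/eqP e|/eqP e]; subst m.
- exact: (mo_refl mo).
- by apply: (mo_div mo); apply: divXv_of; rewrite ffunE eqxx.
- exact: mo_ge1.
Qed.

Lemma ne_of_lead (g g' : mon n -> F) m m' : lead_mon le g m -> lead_mon le g' m' -> m != m' -> g <> g'.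
Proof. by move=> l1 l2 nm e; subst; rewrite (lead_unique mo l1 l2) eqxx in nm. Qed.

Lemma gk k : k != i -> exists g, G g /\ lead_mon le g (Xv k).
Proof.
move=> ki.
have nz : hpoly P Q i k (Xv k) != 0 by rewrite hpoly_Xk oner_neq0.
have [g [mg [mf [Gg lg lf dv]]]] := rgbGB (hpoly_I Di ki) (ex_intro _ (Xv k) nz).
rewrite (lead_unique mo lf (hl ki)) in dv.
case: (div_Xv dv) => e; first by exfalso; exact: no_const (rgbI Gg) lg e.
by exists g; split => //; rewrite -e.
Qed.

Lemma no_Xi g : G g -> ~ lead_mon le g (Xv i).
Proof.
move=> Gg lg; have Ig := rgbI Gg; case: (lg) => gi lm.
move/negP: gi; apply; apply/eqP; apply: (zero_uniq Di Ig) => m gm.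
have z : forall k, k != i -> m k = 0%N.
  move=> k ki; have [g' [Gg' lg']] := gk ki.
  have ne : g <> g' by apply: ne_of_lead lg lg' _; rewrite eq_sym Xv_neq.
  exact: ndivXv_coord (rgbR Gg Gg' ne lg' gm).
have hi : (m i <= 1)%N.
  rewrite leqNgt; apply/negP => h.
  have dv : mdiv (Xv i) m by apply: divXv_of; lia.
  have e := mo_anti mo (lm m gm) (mo_div mo dv).
  by move: h; rewrite e ffunE eqxx.
by case: (shape1 z hi) => ->; rewrite !inE eqxx ?orbT.
Qed.

Lemma gstar : exists g, G g /\ lead_mon le g (X2 i).
Proof.
have nz : gpoly P Q i (X2 i) != 0 by rewrite gpoly_X2 oner_neq0.
have [g [mg [mf [Gg lg lf dv]]]] := rgbGB (gpoly_I P Q i) (ex_intro _ (X2 i) nz).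
rewrite (lead_unique mo lf gl) in dv.
case: (div_X2 dv) => [e|[e|e]].
- by exfalso; exact: no_const (rgbI Gg) lg e.
- by exfalso; apply: (no_Xi Gg); rewrite -e.
- by exists g; split => //; rewrite -e.
Qed.

Lemma hk_eq g k : k != i -> G g -> lead_mon le g (Xv k) -> g = hpoly P Q i k.
Proof.
move=> ki Gg lg; case: (lg) => _ lm.
apply: (hpoly_uniq Di ki (rgbI Gg)).
  move=> m gm.
  have z : forall k', k' != i -> k' != k -> m k' = 0%N.
    move=> k' k'i k'k; have [g' [Gg' lg']] := gk k'i.
    have ne : g <> g' by apply: ne_of_lead lg lg' _; rewrite eq_sym Xv_neq.
    exact: ndivXv_coord (rgbR Gg Gg' ne lg' gm).
  have hi : (m i <= 1)%N.
    have [g' [Gg' lg']] := gstar.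
    have ne : g <> g' by apply: ne_of_lead lg lg' _; rewrite eq_sym X2_neqX.
    exact: ndivX2_coord (rgbR Gg Gg' ne lg' gm).
  case: (posnP (m k)) => [mk0|mkpos].
    have z' : forall k', k' != i -> m k' = 0%N.
      by move=> k' k'i; case: (k' =P k) => [->//|/eqP]; apply: z.
    by case: (shape1 z' hi) => ->; rewrite !inE eqxx ?orbT.
  have e := mo_anti mo (lm m gm) (mo_div mo (divXv_of mkpos)).
  by rewrite e !inE eqxx.
have [m0 [l0 g0]] := rgbL Gg.
by rewrite -(lead_unique mo l0 lg).
Qed.

Lemma g2_eq g : G g -> lead_mon le g (X2 i) -> g = gpoly P Q i.
Proof.
move=> Gg lg; case: (lg) => _ lm.
apply: (gpoly_uniq Di (rgbI Gg)).
  move=> m gm.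
  have z : forall k, k != i -> m k = 0%N.
    move=> k ki; have [g' [Gg' lg']] := gk ki.
    have ne : g <> g' by apply: ne_of_lead lg lg' _; rewrite X2_neqX.
    exact: ndivXv_coord (rgbR Gg Gg' ne lg' gm).
  have hi : (m i <= 2)%N.
    rewrite leqNgt; apply/negP => h.
    have dv : mdiv (X2 i) m by apply: divX2_of; lia.
    have e := mo_anti mo (lm m gm) (mo_div mo dv).
    by move: h; rewrite e ffunE eqxx.
  by case: (shape2 z hi) => [->|[->|->]]; rewrite !inE eqxx ?orbT.
have [m0 [l0 g0]] := rgbL Gg.
by rewrite -(lead_unique mo l0 lg).
Qed.

Lemma classify : same_set G (Gset P Q i).
Proof.
move=> g; split.
  move=> Gg; have [l [lg _]] := rgbL Gg.
  case: (boolP [exists k, (k != i) && (0 < l k)%N]).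
    case/existsP => k /andP[ki lk].
    have [g' [Gg' lg']] := gk ki.
    case: (classic (g = g')) => [e|ne].
      by left; exists k; split => //; subst; exact: hk_eq.
    by exfalso; move: (rgbR Gg Gg' ne lg' lg.1); rewrite divXv_of.
  rewrite negb_exists => /forallP hk.
  have z : forall k, k != i -> l k = 0%N.
    by move=> k ki; have := hk k; rewrite ki /=; lia.
  case: (leqP (l i) 1) => h.
    case: (shape1 z h) => e; exfalso.
      exact: no_const (rgbI Gg) lg e.
    by apply: (no_Xi Gg); rewrite -e.
  have [g' [Gg' lg']] := gstar.
  case: (classic (g = g')) => [e|ne].
    by right; subst; exact: g2_eq.
  by exfalso; move: (rgbR Gg Gg' ne lg' lg.1); rewrite divX2_of.
case=> [[k [ki ->]]|->].
  by have [g' [Gg' lg']] := gk ki; rewrite -(hk_eq ki Gg' lg').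
by have [g' [Gg' lg']] := gstar; rewrite -(g2_eq Gg' lg').
Qed.
End Classify.

Lemma length_size (T : Type) (s : seq T) : length s = size s.
Proof. by elim: s => //= x s ->. Qed.

Lemma nth_map_lt (A B : Type) (f : A -> B) (s : seq A) (x0 : A) d k :
  (k < size s)%N -> List.nth k (map f s) d = f (nth x0 s k).
Proof. by elim: s k => //= a s IH [|k] //= h; apply: IH. Qed.

Section Count.
Variable F : fieldType.
Variable n : nat.
Variables P Q : 'rV[F]_n.
Local Open Scope ring_scope.

Definition ks := [seq j <- enum 'I_n | Pt P j != Pt Q j].

Lemma Gset_distinct a b : a != b -> ~ same_set (Gset P Q a) (Gset P Q b).
Proof.
move=> ab E.
have : Gset P Q b (gpoly P Q a) by apply/E; right.
have ga : gpoly P Q a (X2 a) = 1 by rewrite gpoly_X2.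
case=> [[k [kb e]]|e]; move: ga; rewrite e => h.
  move: h; rewrite /hpoly (negbTE (X2_neqX _ _)) (negbTE (X2_neqX _ _)) (negbTE (X2_neq1 _)).
  by move/eqP; rewrite eq_sym oner_eq0.
move: h; rewrite /gpoly (negbTE (X2_neq ab)) (negbTE (X2_neqX _ _)) (negbTE (X2_neq1 _)).
by move/eqP; rewrite eq_sym oner_eq0.
Qed.

Lemma count_main : P <> Q -> num_reduced_groebner (vanishing_ideal (pair_set P Q)) (size ks).
Proof.
move=> PQ.
exists (map (Gset P Q) ks); split.
- by rewrite length_size size_map.
- move=> G /In_map [i [-> iks]].
  move: iks; rewrite mem_filter => /andP[Di _].
  exists (leo i); split; [exact: leo_mo | exact: gb_leo].
- move=> G [le [mo rgb]].
  have [j0 Dj0] : exists j, Pt P j != Pt Q j.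
    case: (boolP [exists j, Pt P j != Pt Q j]) => [/existsP //|].
    rewrite negb_exists => /forallP h; exfalso; apply: PQ; apply/rowP => j.
    by have := h j; rewrite negbK => /eqP.
  have j0ks : j0 \in ks by rewrite mem_filter Dj0 mem_enum.
  move: j0ks; case E: ks => [//|x t] _.
  have [i iks imax] := seq_max (r := fun a b => le (Xv b) (Xv a))
     (fun a b => mo_total mo (Xv b) (Xv a))
     (fun b a c h1 h2 => mo_trans mo h2 h1) x t.
  have iks' : i \in ks by rewrite E.
  move: (iks'); rewrite mem_filter => /andP[Di _].
  exists (Gset P Q i); split.
    by apply/In_map; exists i; split.
  apply: (classify mo rgb Di) => j Dj; apply: imax.
  by rewrite -E mem_filter Dj mem_enum.
- move=> a b; rewrite length_size size_map => /ltP ha /ltP hb ab d.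
  have uks : uniq ks by rewrite filter_uniq // enum_uniq.
  move: uks ha hb; case E: ks => [//|x t] uks ha hb.
  rewrite (@nth_map_lt _ _ (Gset P Q) (x :: t) x d a ha) (@nth_map_lt _ _ (Gset P Q) (x :: t) x d b hb).
  apply: Gset_distinct; rewrite nth_uniq //; apply/eqP => e; apply: ab; exact: e.
Qed.
End Count.

Theorem mainTheorem2 (p n : nat) (hp : prime p) (hn : (1 <= n)%N) :
  (forall P Q : 'rV['F_p]_n, P <> Q ->
     exists k, num_reduced_groebner (vanishing_ideal (pair_set P Q)) k /\ (k <= n)%N) /\
  (exists P Q : 'rV['F_p]_n, P <> Q /\
     num_reduced_groebner (vanishing_ideal (pair_set P Q)) n).
Proof.
split.
  move=> P Q PQ; exists (size (ks P Q)); split; first exact: count_main.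
  by rewrite /ks size_filter (leq_trans (count_size _ _)) // size_enum_ord.
have j0 : 'I_n := Ordinal hn.
exists (const_mx (0%R : 'F_p) : 'rV['F_p]_n), (const_mx (1%R : 'F_p)).
have allD : forall j, Pt (const_mx (0%R : 'F_p) : 'rV['F_p]_n) j != Pt (const_mx (1%R : 'F_p) : 'rV['F_p]_n) j.
  by move=> j; rewrite /Pt !mxE eq_sym oner_eq0.
split.
  by move/matrixP => /(_ ord0 j0); rewrite !mxE => /eqP; rewrite eq_sym oner_eq0.
have E : size (ks (const_mx (0%R : 'F_p) : 'rV['F_p]_n) (const_mx (1%R : 'F_p))) = n.
  by rewrite /ks (eq_filter (a2 := predT)) ?filter_predT ?size_enum_ord // => j; rewrite allD.
rewrite -[X in num_reduced_groebner _ X]E; apply: count_main.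
by move/matrixP => /(_ ord0 j0); rewrite !mxE => /eqP; rewrite eq_sym oner_eq0.
Qed.
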